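(* Let $n\ge1$ and $m\ge2$. Every geodesic in $Y_{n,m}$ ending at the all-zero vertex $0$ has a wall.
   Context: The Yoke graph $Y_{n,m}$ has vertices the tuples $v=(v_0,\dots,v_{m+1})$ with $v_0,v_{m+1}\in\mathbb{Z}_n$, $v_1,\dots,v_m\in\{0,1\}$, $\sum v_i\equiv0\pmod n$; $u\sim v$ iff $u=\overleftarrow{s}_i(v)$ or $u=\overrightarrow{s}_i(v)$ for some $0\le i\le m$, where $\overleftarrow{s}_i(v)$ (left shift) replaces $v_i,v_{i+1}$ by $v_i+1,v_{i+1}-1$ and $\overrightarrow{s}_i(v)$ (right shift) by $v_i-1,v_{i+1}+1$ (buckets mod $n$). For a path $P=(v^0\sim\dots\sim v^d=0)$: an integer $0\le p\le m$ is an inner wall of $P$ if no step of $P$ changes entries $p$ and $p+1$; $-1$ is a (left outer) wall if no step satisfies $v^t=\overleftarrow{s}_0(v^{t-1})$; $m+1$ is a (right outer) wall if no step satisfies $v^t=\overrightarrow{s}_m(v^{t-1})$. A wall is an inner or outer wall. *)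

(* Defs.v *)
From mathcomp Require Import all_boot all_order all_algebra.
Set Implicit Arguments. Unset Strict Implicit. Unset Printing Implicit Defensive.
Import Order.TTheory GRing.Theory Num.Theory.
Local Open Scope ring_scope.

(* A vertex is a sequence v = [:: v_0; v_1; ...; v_{m+1}]
   of integers of size m+2; the "buckets" v_0 and v_{m+1} are represented by
   their canonical residues in [0, n) (elements of Z_n), the inner entries lie
   in {0,1}, and the total sum is 0 mod n. *)

Definition is_bucket (m j : nat) : bool := (j == 0)%N || (j == m.+1)%N.

Definition ynorm (n m j : nat) (x : int) : int :=
  if is_bucket m j then (x %% n%:Z)%Z else x.

Definition yvertex (n m : nat) (v : seq int) : bool :=
  [&& size v == m.+2,
      all (fun j => if is_bucket m j then (0 <= nth 0 v j) && (nth 0 v j < n%:Z)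
                    else (nth 0 v j == 0) || (nth 0 v j == 1)) (iota 0 m.+2)
    & ((\sum_(x <- v) x) %% n%:Z)%Z == 0].

Definition yzero (m : nat) : seq int := nseq m.+2 0.

Definition yshift (n m i : nat) (a b : int) (v : seq int) : seq int :=
  [seq ynorm n m j (nth 0 v j + (if j == i then a else if j == i.+1 then b else 0))
  | j <- iota 0 m.+2].

Definition ylshift (n m i : nat) (v : seq int) := yshift n m i 1 (-1) v.
Definition yrshift (n m i : nat) (v : seq int) := yshift n m i (-1) 1 v.

Definition yedge (n m : nat) : rel (seq int) := fun v u =>
  [&& yvertex n m v, yvertex n m u &
      has (fun i => (u == ylshift n m i v) || (u == yrshift n m i v)) (iota 0 m.+1)].

(* A path v^0 ~ v^1 ~ ... ~ v^d is given by its start x = v^0 and the list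
   s = [:: v^1; ...; v^d]; it is valid if [path (yedge n m) x s].
   Its steps are the pairs (v^{t-1}, v^t), t = 1..d. *)
Definition ysteps (x : seq int) (s : seq (seq int)) := zip (x :: s) s.

Definition ygeodesic (n m : nat) (x : seq int) (s : seq (seq int)) : Prop :=
  yvertex n m x /\ path (yedge n m) x s /\
  forall s', path (yedge n m) x s' -> last x s' = last x s -> (size s <= size s')%N.

Definition inner_wall (n m : nat) (x : seq int) (s : seq (seq int)) (p : nat) : Prop :=
  (p <= m)%N /\
  all (fun st => (st.2 != ylshift n m p st.1) && (st.2 != yrshift n m p st.1)) (ysteps x s).

(* -1 is a (left outer) wall: no step v^t = s_0^<-(v^{t-1}) *)
Definition left_outer_wall (n m : nat) (x : seq int) (s : seq (seq int)) : Prop :=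
  all (fun st => st.2 != ylshift n m 0 st.1) (ysteps x s).

(* m+1 is a (right outer) wall: no step v^t = s_m^->(v^{t-1}) *)
Definition right_outer_wall (n m : nat) (x : seq int) (s : seq (seq int)) : Prop :=
  all (fun st => st.2 != yrshift n m m st.1) (ysteps x s).

Definition has_wall (n m : nat) (x : seq int) (s : seq (seq int)) : Prop :=
  (exists p, inner_wall n m x s p) \/ left_outer_wall n m x s \/ right_outer_wall n m x s.

(* Main.v *)
Require Import Defs.
From mathcomp Require Import all_boot all_order all_algebra zify.
Set Implicit Arguments. Unset Strict Implicit. Unset Printing Implicit Defensive.
Import Order.TTheory GRing.Theory Num.Theory.
Local Open Scope ring_scope.

Definition PP (v : seq int) (p : nat) : int := \sum_(1 <= k < p.+1) nth 0 v k.
Definition dl (i : nat) (a b : int) (k : nat) : int :=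
  if k == i then a else if k == i.+1 then b else 0.

Lemma nth_yshift n m i a b v j : (j < m.+2)%N ->
  nth 0 (yshift n m i a b v) j = ynorm n m j (nth 0 v j + dl i a b j).
Proof. by move=> hj; rewrite /yshift (nth_map 0%N) ?size_iota // nth_iota. Qed.

Lemma ynorm_inner n m j x : (1 <= j <= m)%N -> ynorm n m j x = x.
Proof.
move=> /andP[h1 h2]; rewrite /ynorm /is_bucket.
have -> : (j == 0)%N = false by apply/eqP; lia.
by have -> : (j == m.+1)%N = false by apply/eqP; lia.
Qed.

Lemma ynorm0 n m x : ynorm n m 0 x = (x %% n%:Z)%Z.
Proof. by []. Qed.

Lemma dl_spec i a b k :
  (k = i /\ dl i a b k = a) \/ (k = i.+1 /\ dl i a b k = b) \/
  (k <> i /\ k <> i.+1 /\ dl i a b k = 0).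
Proof.
rewrite /dl; case: eqP => [->|h1]; first by left.
case: eqP => [->|h2]; first by right; left.
by right; right.
Qed.

Lemma sum_dl l h i a b : (l <= h)%N ->
  \sum_(l <= k < h) dl i a b k =
  (if (l <= i < h)%N then a else 0) + (if (l <= i.+1 < h)%N then b else 0).
Proof.
elim: h => [|h IH] hl.
  by rewrite big_geq //; repeat (case: ifP => ?); lia.
case: (eqVneq l h.+1) => [eh|ne].
  by rewrite eh big_geq //; repeat (case: ifP => ?); lia.
rewrite big_nat_recr /=; last by lia.
rewrite IH; last by lia.
have [[e d]|[[e d]|[e1 [e2 d]]]] := dl_spec i a b h; rewrite d;
  by repeat (case: ifP => ?); lia.
Qed.

Lemma PP_shift n m i a b v p : (p <= m)%N ->
  PP (yshift n m i a b v) p =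
  PP v p + ((if (1 <= i <= p)%N then a else 0) + (if (i.+1 <= p)%N then b else 0)).
Proof.
move=> hp; rewrite /PP.
rewrite (eq_big_nat _ _ (F2 := fun k => nth 0 v k + dl i a b k)); last first.
  move=> k hk; rewrite nth_yshift; last by lia.
  by rewrite ynorm_inner //; lia.
rewrite big_split /= sum_dl // ?addrA //.

Qed.

Lemma PP0 v : PP v 0 = 0.
Proof. by rewrite /PP big_geq. Qed.

Lemma PPS v p : PP v p.+1 = PP v p + nth 0 v p.+1.
Proof. by rewrite /PP big_nat_recr. Qed.

Lemma shift_key n m i j a b a' b' v k :
  yshift n m i a b v = yshift n m j a' b' v -> (1 <= k <= m)%N ->
  dl i a b k = dl j a' b' k.
Proof.
move=> E hk; have := congr1 (fun s => nth 0 s k) E => /=.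
rewrite !nth_yshift; try lia.
by rewrite !ynorm_inner // => /addrI.
Qed.

Lemma shift_inj_half n m i j a b a' b' v : (2 <= m)%N -> (i <= m)%N -> (j <= m)%N ->
  (1 <= i)%N ->
  (a = 1 /\ b = -1) \/ (a = -1 /\ b = 1) ->
  (a' = 1 /\ b' = -1) \/ (a' = -1 /\ b' = 1) ->
  yshift n m i a b v = yshift n m j a' b' v -> i = j /\ a = a'.
Proof.
move=> hm hi hj hi1 hab hab' E.
have k1 := shift_key (k:=i) E; have s1 := dl_spec i a b i; have t1 := dl_spec j a' b' i.
have [ij|nij] := eqVneq i j.
  by split=> //; lia.
have ij1 : i = j.+1 by lia.
have [im|nim] := eqVneq i m.
  have k3 := shift_key (k:=j) E; have s3 := dl_spec i a b j; have t3 := dl_spec j a' b' j.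
  lia.
have k2 := shift_key (k:=i.+1) E; have s2 := dl_spec i a b i.+1; have t2 := dl_spec j a' b' i.+1.
lia.
Qed.

Lemma shift_inj n m i j a b a' b' v : (2 <= m)%N -> (i <= m)%N -> (j <= m)%N ->
  (a = 1 /\ b = -1) \/ (a = -1 /\ b = 1) ->
  (a' = 1 /\ b' = -1) \/ (a' = -1 /\ b' = 1) ->
  yshift n m i a b v = yshift n m j a' b' v -> i = j /\ a = a'.
Proof.
move=> hm hi hj hab hab' E.
case: (posnP i) => [i0|ip]; last exact: shift_inj_half E.
case: (posnP j) => [j0|jp]; last first.
  by have [] := shift_inj_half hm hj hi jp hab' hab (esym E).
have k1 := shift_key (k := 1%N) E; have s1 := dl_spec i a b 1; have t1 := dl_spec j a' b' 1.
lia.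
Qed.

Definition up n m p (st : seq int * seq int) : bool := st.2 == ylshift n m p st.1.
Definition dn n m p (st : seq int * seq int) : bool := st.2 == yrshift n m p st.1.

Lemma pm1 : ((1:int) = 1 /\ (-1:int) = -1) \/ ((1:int) = -1 /\ (-1:int) = 1).
Proof. by left. Qed.
Lemma mp1 : ((-1:int) = 1 /\ (1:int) = -1) \/ ((-1:int) = -1 /\ (1:int) = 1).
Proof. by right. Qed.

Lemma up_l n m i p v : (2 <= m)%N -> (i <= m)%N -> (p <= m)%N ->
  up n m p (v, ylshift n m i v) = (p == i).
Proof.
move=> hm hi hp; rewrite /up /=; apply/eqP/eqP => [E|->//].
by have [] := shift_inj hm hi hp pm1 pm1 E.
Qed.
Lemma dn_l n m i p v : (2 <= m)%N -> (i <= m)%N -> (p <= m)%N ->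
  dn n m p (v, ylshift n m i v) = false.
Proof.
move=> hm hi hp; rewrite /dn /=; apply/eqP => E.
by have [_] := shift_inj hm hi hp pm1 mp1 E.
Qed.
Lemma up_r n m i p v : (2 <= m)%N -> (i <= m)%N -> (p <= m)%N ->
  up n m p (v, yrshift n m i v) = false.
Proof.
move=> hm hi hp; rewrite /up /=; apply/eqP => E.
by have [_] := shift_inj hm hi hp mp1 pm1 E.
Qed.
Lemma dn_r n m i p v : (2 <= m)%N -> (i <= m)%N -> (p <= m)%N ->
  dn n m p (v, yrshift n m i v) = (p == i).
Proof.
move=> hm hi hp; rewrite /dn /=; apply/eqP/eqP => [E|->//].
by have [] := shift_inj hm hi hp mp1 mp1 E.
Qed.

Lemma sum_ind N i : (\sum_(0 <= p < N) (p == i : nat))%N = (i < N)%N.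
Proof.
elim: N => [|N IH]; first by rewrite big_geq.
rewrite big_nat_recr //= IH; case: eqP => [->|h] /=.
  by rewrite ltnn ltnSn.
have E : ((i < N.+1)%N = (i < N)%N :> bool) by apply/idP/idP; lia.
by rewrite E addn0.

Qed.

Lemma step_sum n m st : (2 <= m)%N ->
  (\sum_(0 <= p < m.+1) (up n m p st + dn n m p st) <= 1)%N.
Proof.
move=> hm; case: st => v w.
case: (boolP (has (fun i => up n m i (v, w) || dn n m i (v, w)) (iota 0 m.+1))).
  move=> /hasP [i]; rewrite mem_iota => hi /orP [] /eqP E; simpl in E; subst w.
    rewrite (eq_big_nat _ _ (F2 := fun p => (p == i : nat))) ?sum_ind; first by case: (i < m.+1)%N.
    by move=> p hp; rewrite up_l ?dn_l ?addn0 //; lia.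
  rewrite (eq_big_nat _ _ (F2 := fun p => (p == i : nat))) ?sum_ind; first by case: (i < m.+1)%N.
  by move=> p hp; rewrite up_r ?dn_r ?add0n //; lia.
move=> /hasPn H; rewrite big1_seq //= => p; rewrite mem_index_iota => hp.
by have := H p; rewrite mem_iota; move/(_ hp); case: (up _ _ _ _); case: (dn _ _ _ _).
Qed.

Lemma count_sum n m (l : seq (seq int * seq int)) : (2 <= m)%N ->
  (\sum_(0 <= p < m.+1) (count (up n m p) l + count (dn n m p) l) <= size l)%N.
Proof.
move=> hm; elim: l => [|st l IH].
  by rewrite big1_seq.
rewrite /= (eq_big_nat _ _ (F2 := fun p =>
   ((up n m p st + dn n m p st) + (count (up n m p) l + count (dn n m p) l))%N)).
  rewrite big_split /= -[(size l).+1]add1n; apply: leq_add => //; exact: step_sum.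
by move=> p _; rewrite /=; lia.
Qed.

Lemma yedge_shift n m v w : yedge n m v w ->
  exists i, (i <= m)%N /\ (w = ylshift n m i v \/ w = yrshift n m i v).
Proof.
case/and3P => _ _ /hasP [i]; rewrite mem_iota => hi /orP [] /eqP E; exists i;
  split; by [lia | left | right].
Qed.

Definition ee n m p (st : seq int * seq int) : int :=
  (up n m p st : nat)%:Z - (dn n m p st : nat)%:Z.

Lemma step_inv n m v w : (2 <= m)%N -> yedge n m v w ->
  (forall p, (p <= m)%N -> PP w p - PP v p = ee n m p (v, w) - ee n m 0 (v, w)) /\
  ((nth 0 w 0) %% n%:Z = (nth 0 v 0 + ee n m 0 (v, w)) %% n%:Z)%Z.
Proof.
move=> hm /yedge_shift [i [hi [->|->]]]; split.
- move=> p hp; rewrite /ee up_l ?dn_l // up_l ?dn_l // PP_shift //.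
  rewrite addrAC subrr add0r.
  by repeat (case: ifP => ?); case: eqP => ?; case: eqP => ?; simpl; lia.
- rewrite /ee up_l ?dn_l // nth_yshift // ynorm0 modz_mod /dl.
  by case: (0%N == i) => /=; rewrite ?subr0 ?sub0r ?addr0.
- move=> p hp; rewrite /ee up_r ?dn_r // up_r ?dn_r // PP_shift //.
  rewrite addrAC subrr add0r.
  by repeat (case: ifP => ?); case: eqP => ?; case: eqP => ?; simpl; lia.
- rewrite /ee up_r ?dn_r // nth_yshift // ynorm0 modz_mod /dl.
  by case: (0%N == i) => /=; rewrite ?subr0 ?sub0r ?addr0.
Qed.

Definition DD n m p (l : seq (seq int * seq int)) : int :=
  (count (up n m p) l : nat)%:Z - (count (dn n m p) l : nat)%:Z.

Lemma DD_cons n m p st l : DD n m p (st :: l) = ee n m p st + DD n m p l.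
Proof. rewrite /DD /ee /=; lia. Qed.

Lemma modD_congr (a b c d : int) : (a %% d = b %% d)%Z -> ((a + c) %% d = (b + c) %% d)%Z.
Proof. by move=> h; rewrite -modzDml h modzDml. Qed.

Lemma path_inv n m v s : (2 <= m)%N -> path (yedge n m) v s ->
  (forall p, (p <= m)%N ->
     PP (last v s) p - PP v p = DD n m p (ysteps v s) - DD n m 0 (ysteps v s)) /\
  ((nth 0 (last v s) 0) %% n%:Z = (nth 0 v 0 + DD n m 0 (ysteps v s)) %% n%:Z)%Z.
Proof.
move=> hm; elim: s v => [|w s IH] v /=.
  by move=> _; split => [p _|]; rewrite /DD /= ?subrr ?addr0.
case/andP => e pa.
have [h1 h2] := step_inv hm e.
have [h3 h4] := IH w pa.
have -> : ysteps v (w :: s) = (v, w) :: ysteps w s by [].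
split.
  move=> p hp; rewrite !DD_cons.
  have := h1 p hp; have := h3 p hp; lia.
rewrite DD_cons addrA h4.
have := modD_congr (DD n m 0 (ysteps w s)) h2; by [].
Qed.

Lemma vsize n m v : yvertex n m v -> size v = m.+2.
Proof. by case/and3P => /eqP. Qed.

Lemma vinner n m v j : yvertex n m v -> (1 <= j <= m)%N ->
  nth 0 v j = 0 \/ nth 0 v j = 1.
Proof.
case/and3P => _ /allP H _ hj.
have := H j; rewrite mem_iota /is_bucket.
have -> : (j == 0)%N = false by apply/eqP; lia.
have -> : (j == m.+1)%N = false by apply/eqP; lia.
move/(_ ltac:(lia)) => /orP [] /eqP; by [left | right].
Qed.

Lemma vbucket n m v j : yvertex n m v -> is_bucket m j ->
  0 <= nth 0 v j /\ nth 0 v j < n%:Z.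
Proof.
case/and3P => _ /allP H _ hj.
have := H j; rewrite mem_iota hj.
have hj' : (0 <= j < 0 + m.+2)%N by move: hj; rewrite /is_bucket; case/orP => /eqP ->; lia.
by move/(_ hj') => /andP.
Qed.

Lemma vsum n m v : yvertex n m v -> ((\sum_(y <- v) y) %% n%:Z = 0)%Z.
Proof. by case/and3P => _ _ /eqP. Qed.

Lemma sum_split m v : size v = m.+2 ->
  \sum_(y <- v) y = nth 0 v 0 + PP v m + nth 0 v m.+1.
Proof.
move=> hs; rewrite (big_nth 0) hs big_ltn // big_nat_recr //= addrA.
by rewrite /PP.
Qed.

Lemma ynorm_mod n m j y : ((ynorm n m j y) %% n%:Z = y %% n%:Z)%Z.
Proof. by rewrite /ynorm; case: ifP => // _; rewrite modz_mod. Qed.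

Lemma sum_ynorm n m (r : seq nat) (g : nat -> int) :
  ((\sum_(j <- r) ynorm n m j (g j)) %% n%:Z = (\sum_(j <- r) g j) %% n%:Z)%Z.
Proof.
elim: r => [|j r IH]; first by rewrite !big_nil.
rewrite !big_cons -modzDml ynorm_mod modzDml -modzDmr IH modzDmr.
done.
Qed.

Lemma sum_shift n m i a b v : (i <= m)%N ->
  ((\sum_(y <- yshift n m i a b v) y) %% n%:Z =
   (\sum_(0 <= j < m.+2) nth 0 v j + a + b) %% n%:Z)%Z.
Proof.
move=> hi; rewrite /yshift big_map sum_ynorm.
have -> : iota 0 m.+2 = index_iota 0 m.+2 by rewrite /index_iota subn0.
rewrite big_split /= sum_dl //.
have -> : (0 <= i < m.+2)%N = true by lia.
have -> : (0 <= i.+1 < m.+2)%N = true by lia.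
by rewrite addrA.
Qed.

Lemma shift_vertex n m i a b x : (1 <= n)%N -> yvertex n m x -> (i <= m)%N ->
  a + b = 0 ->
  ((1 <= i)%N -> 0 <= nth 0 x i + a <= 1) ->
  ((i.+1 <= m)%N -> 0 <= nth 0 x i.+1 + b <= 1) ->
  yvertex n m (yshift n m i a b x).
Proof.
move=> hn hx hi hab h1 h2; apply/and3P; split.
- by rewrite size_map size_iota.
- apply/allP => j; rewrite mem_iota add0n => hj; rewrite nth_yshift //.
  case: (boolP (is_bucket m j)) => hb.
    rewrite /ynorm hb; apply/andP; split.
      by apply: modz_ge0; apply/eqP; lia.
    by apply: ltz_pmod; lia.
  have hj' : (1 <= j <= m)%N.
    by move: hb; rewrite /is_bucket negb_or => /andP [/eqP ? /eqP ?]; lia.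
  rewrite ynorm_inner //.
  have := vinner hx hj'; have := dl_spec i a b j => hd hv.
  have : nth 0 x j + dl i a b j = 0 \/ nth 0 x j + dl i a b j = 1.
    case: hd => [[e d]|[[e d]|[e1 [e2 d]]]].
    - subst j; have := h1 ltac:(lia); rewrite d; lia.
    - subst j; have := h2 ltac:(lia); rewrite d; lia.
    - rewrite d; lia.
  by case=> ->.
- rewrite sum_shift // -addrA hab addr0.
  have := vsum hx; rewrite (big_nth 0) (vsize hx) => ->.
  done.
Qed.

Lemma searchA (F g : nat -> int) m p :
  (forall j, (1 <= j <= m)%N -> g j = 0 \/ g j = 1) ->
  (forall j, F j.+1 = F j + g j.+1) -> (p <= m)%N -> 0 < F p ->
  exists i, (i <= m)%N /\ 0 < F i /\ (i = 0%N \/ g i = 1) /\ (i = m \/ g i.+1 = 0).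
Proof.
move=> hg hF hp hFp.
have [a [ha [Fa h]]] : exists a, (a <= p)%N /\ 0 < F a /\ (a = 0%N \/ F a.-1 <= 0).
  elim: p hp hFp => [|p IH] hp hFp; first by exists 0%N; split => //; split => //; left.
  case: (ltrP 0 (F p)) => h.
    have [a [? [? ?]]] := IH (ltnW hp) h.
    by exists a; split => //; apply: leq_trans (leqnSn _).
  by exists p.+1; split => //; split => //; right.
have Q : a = 0%N \/ g a = 1.
  case: a ha Fa h => [|a'] ha Fa h; first by left.
  right; have := hF a'; have := hg a'.+1 ltac:(lia); simpl in h; case: h => h //; lia.
have asc : forall k i, (m - i)%N = k -> (i <= m)%N -> 0 < F i -> (i = 0%N \/ g i = 1) ->
   exists j, (j <= m)%N /\ 0 < F j /\ (j = 0%N \/ g j = 1) /\ (j = m \/ g j.+1 = 0).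
  elim=> [|k IH] i hk him hFi hgi.
    by exists i; split => //; split => //; split => //; left; lia.
  have [g0|g1] := hg i.+1 ltac:(lia).
    by exists i; split => //; split => //; split => //; right.
  have := hF i => hFi1; apply: (IH i.+1); try lia.
exact: (asc _ a erefl (leq_trans ha hp) Fa Q).
Qed.

Lemma searchB (F g : nat -> int) m p :
  (forall j, (1 <= j <= m)%N -> g j = 0 \/ g j = 1) ->
  (forall j, F j.+1 = F j + g j.+1) -> (p <= m)%N -> F p < 0 ->
  exists i, (i <= m)%N /\ F i < 0 /\ (i = 0%N \/ g i = 0) /\ (i = m \/ g i.+1 = 1).
Proof.
move=> hg hF hp hFp.
have asc : forall k p, (m - p)%N = k -> (p <= m)%N -> F p < 0 ->
    exists b, (b <= m)%N /\ F b < 0 /\ (b = m \/ 0 <= F b.+1).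
  elim=> [|k IH] q hk hq hFq; first by exists q; split => //; split => //; left; lia.
  case: (ltrP (F q.+1) 0) => h.
    by apply: (IH q.+1); lia.
  by exists q; split => //; split => //; right.
have [b [hb [Fb h]]] := asc _ p erefl hp hFp.
have Q : b = m \/ g b.+1 = 1.
  case: h => h; first by left.
  case: (eqVneq b m) => e; first by left.
  right; have := hF b; have := hg b.+1 ltac:(lia); lia.
have desc : forall j, (j <= m)%N -> F j < 0 -> (j = m \/ g j.+1 = 1) ->
   exists i, (i <= m)%N /\ F i < 0 /\ (i = 0%N \/ g i = 0) /\ (i = m \/ g i.+1 = 1).
  elim=> [|j IH] hj hFj hgj.
    by exists 0%N; split => //; split => //; split => //; left.
  have [g0|g1] := hg j.+1 ltac:(lia).
    by exists j.+1; split => //; split => //; split => //; right.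
  have := hF j => hh; apply: IH; lia.
exact: desc hb Fb Q.
Qed.

Lemma sum_abs_step (F : nat -> int) i a h :
  (a = 1 /\ F i < 0) \/ (a = -1 /\ 0 < F i) ->
  (\sum_(0 <= p < h) absz (F p + (if p == i then a else 0))%R + (i < h) =
   \sum_(0 <= p < h) absz (F p))%N.
Proof.
move=> ha; elim: h => [|h IH]; first by rewrite !big_geq.
rewrite !big_nat_recr //=.
case: eqP => [e|ne].
  subst h; move: IH; rewrite ltnSn ltnn /= addn0 addn1; lia.
have -> : (i < h.+1)%N = (i < h)%N by apply/idP/idP; lia.
rewrite addr0; move: IH; case: (i < h)%N => /=; lia.
Qed.

Lemma term_le_sum (f : nat -> nat) q h : (q < h)%N ->
  (f q <= \sum_(0 <= p < h) f p)%N.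
Proof.
elim: h => [//|h IH] hq; rewrite big_nat_recr //=.
case: (eqVneq q h) => [->|ne]; first by apply: leq_addl.
by apply: leq_trans (IH ltac:(lia)) (leq_addr _ _).
Qed.

Definition Phi m x c : nat := (\sum_(0 <= p < m.+1) absz (c + PP x p)%R)%N.

Lemma build_step n m i a b x c : (1 <= n)%N -> yvertex n m x -> (i <= m)%N ->
  (a = 1 /\ b = -1) \/ (a = -1 /\ b = 1) ->
  ((1 <= i)%N -> 0 <= nth 0 x i + a <= 1) ->
  ((i.+1 <= m)%N -> 0 <= nth 0 x i.+1 + b <= 1) ->
  (a = 1 /\ c + PP x i < 0) \/ (a = -1 /\ 0 < c + PP x i) ->
  (nth 0 x 0 %% n%:Z = c %% n%:Z)%Z ->
  [/\ yvertex n m (yshift n m i a b x), yedge n m x (yshift n m i a b x),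
      (nth 0 (yshift n m i a b x) 0 %% n%:Z = (c + (if 0%N == i then a else 0)) %% n%:Z)%Z &
      (Phi m (yshift n m i a b x) (c + (if 0%N == i then a else 0)) + 1 = Phi m x c)%N].
Proof.
move=> hn hx hi hab h1 h2 hs hc.
have hy : yvertex n m (yshift n m i a b x) by apply: shift_vertex => //; lia.
split => //.
- apply/and3P; split => //; apply/hasP; exists i; first by rewrite mem_iota; lia.
  by case: hab => [[-> ->]|[-> ->]]; apply/orP; [left|right].
- rewrite nth_yshift // ynorm0 modz_mod /dl.
  case: (0%N == i) => /=; last by rewrite !addr0.
  exact: modD_congr.
- have H := @sum_abs_step (fun p => c + PP x p) i a m.+1 hs; simpl in H.
  rewrite /Phi -ltnS in hi; rewrite hi /= addn1 in H; rewrite /Phi -H.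
  rewrite addn1; congr S; apply: eq_big_nat => p hp; congr absz.
  rewrite PP_shift; last by lia.
  by repeat (case: ifP => /eqP ?); lia.
Qed.

Lemma build n m N : (1 <= n)%N -> (2 <= m)%N -> forall x c, yvertex n m x ->
  (nth 0 x 0 %% n%:Z = c %% n%:Z)%Z -> Phi m x c = N ->
  exists s, path (yedge n m) x s /\ last x s = yzero m /\ size s = N.
Proof.
move=> hn hm; elim: N => [|N IH] x c hx hc hP.
  have hz : forall p, (p <= m)%N -> c + PP x p = 0.
    move=> p hp; have := @term_le_sum (fun p => absz (c + PP x p)%R) p m.+1 ltac:(lia).
    move: hP; rewrite /Phi => -> /=; lia.
  have c0 : c = 0 by have := hz 0%N (leq0n _); rewrite PP0 addr0.
  subst c.
  have hb0 := vbucket hx (isT : is_bucket m 0).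
  have x0 : nth 0 x 0 = 0.
    by move: hc; rewrite mod0z modz_small //; apply/andP; case: hb0.
  have xin : forall j, (1 <= j <= m)%N -> nth 0 x j = 0.
    move=> [|j] hj //; have := PPS x j; have := hz j ltac:(lia);
    have := hz j.+1 ltac:(lia); lia.
  have hbm : is_bucket m m.+1 by rewrite /is_bucket eqxx orbT.
  have hb1 := vbucket hx hbm.
  have x1 : nth 0 x m.+1 = 0.
    have := vsum hx; rewrite (sum_split (vsize hx)) x0 add0r.
    have := hz m (leqnn _); rewrite add0r => ->; rewrite add0r.
    by rewrite modz_small //; apply/andP; case: hb1.
  exists [::]; split => //; split => //=.
  apply: (eq_from_nth (x0 := 0)); first by rewrite (vsize hx) size_nseq.
  move=> j; rewrite (vsize hx) => hj; rewrite nth_nseq hj.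
  case: j hj => [|j] hj; first exact: x0.
  case: (eqVneq j m) => [->|ne]; first exact: x1.
  by apply: xin; lia.
have : ~~ all (fun p => c + PP x p == 0) (iota 0 m.+1).
  apply/negP => /allP H; move: hP; rewrite /Phi big1_seq //.
  move=> p; rewrite mem_index_iota => hp; have := H p; rewrite mem_iota.
  by move/(_ hp) => /eqP ->.
rewrite -has_predC => /hasP [p]; rewrite mem_iota /= => hp hnz.
have hg : forall j, (1 <= j <= m)%N -> nth 0 x j = 0 \/ nth 0 x j = 1.
  by move=> j hj; exact: (vinner hx hj).
have hF : forall j, (fun p => c + PP x p) j.+1 = (fun p => c + PP x p) j + nth 0 x j.+1.
  by move=> j /=; rewrite PPS addrA.
have hp' : (p <= m)%N by lia.
case: (ltrP 0 (c + PP x p)) => hpos.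
  have [i [hi [Fi [g1 g2]]]] := searchA hg hF hp' hpos.
  have [hy he hc' hP'] := @build_step n m i (-1) 1 x c hn hx hi ltac:(by right)
     ltac:(lia) ltac:(lia) ltac:(by right) hc.
  have [s [ps [ls ss]]] := IH _ _ hy hc' ltac:(lia).
  by exists (yshift n m i (-1) 1 x :: s); rewrite /= he ps ls ss.
have hneg : c + PP x p < 0 by move: hnz; rewrite lt_neqAle hpos andbT.
have [i [hi [Fi [g1 g2]]]] := searchB hg hF hp' hneg.
have [hy he hc' hP'] := @build_step n m i 1 (-1) x c hn hx hi ltac:(by left)
   ltac:(lia) ltac:(lia) ltac:(by left) hc.
have [s [ps [ls ss]]] := IH _ _ hy hc' ltac:(lia).
by exists (yshift n m i 1 (-1) x :: s); rewrite /= he ps ls ss.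
Qed.

Lemma PP_zero m p : PP (yzero m) p = 0.
Proof.
rewrite /PP big1_seq // => k _; rewrite /yzero nth_nseq; by case: ifP.
Qed.

Lemma eq_sums (f g : nat -> nat) h : (forall p, (p < h)%N -> (g p <= f p)%N) ->
  (\sum_(0 <= p < h) f p <= \sum_(0 <= p < h) g p)%N ->
  forall p, (p < h)%N -> f p = g p.
Proof.
elim: h => [//|h IH] hle hs p hp.
move: hs; rewrite !big_nat_recr //= => hs.
have h1 : (\sum_(0 <= p < h) g p <= \sum_(0 <= p < h) f p)%N.
  by rewrite big_nat_cond [X in (_ <= X)%N]big_nat_cond; apply: leq_sum => q /andP [/andP [_ hq] _]; apply: hle; lia.
have h2 := hle h (ltnSn _).
case: (eqVneq p h) => [->|ne]; first lia.
apply: IH => //; [move=> q hq; apply: hle; lia | lia | lia].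
Qed.

Lemma size_ysteps (x : seq int) s : size (ysteps x s) = size s.
Proof. by rewrite /ysteps size_zip /= minnE subSnn subn1. Qed.

From Stdlib Require Import Classical.

Theorem lemma4p7 (n m : nat) (hn : (1 <= n)%N) (hm : (2 <= m)%N)
  (x : seq int) (s : seq (seq int)) :
  ygeodesic n m x s -> last x s = yzero m -> has_wall n m x s.
Proof.
move=> [hx [hpath hmin]] hlast.
have [inv1 inv2] := path_inv hm hpath.
rewrite hlast in inv1 inv2.
set l := ysteps x s in inv1 inv2.
pose U p := count (up n m p) l.
pose V p := count (dn n m p) l.
have hD : forall p, DD n m p l = (Posz (U p)) - (Posz (V p)) by [].
have hxp : forall p, (p <= m)%N -> PP x p = (DD n m 0 l - DD n m p l)%R.
  move=> p hp; have := inv1 p hp; rewrite PP_zero; lia.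
have hc : (nth 0 x 0 %% (Posz n) = (- DD n m 0 l) %% (Posz n))%Z.
  have e1 : ((nth 0 x 0 + DD n m 0 l) %% (Posz n) = 0 %% (Posz n))%Z.
    by rewrite -inv2 /yzero nth_nseq.
  have := modD_congr (- DD n m 0 l) e1.
  by rewrite -addrA subrr addr0 add0r.
have [s' [ps' [ls' ss']]] := build hn hm hx hc erefl.
have hle := hmin s' ps'; rewrite ls' hlast ss' in hle.
have hcount := count_sum n l hm.
rewrite size_ysteps in hcount.
have hPhi : Phi m x (- DD n m 0 l) = (\sum_(0 <= p < m.+1) absz ((Posz (U p)) - (Posz (V p))))%N.
  rewrite /Phi; apply: eq_big_nat => p hp; rewrite hxp; last by lia.
  rewrite !hD; lia.
rewrite hPhi in hle; have {}hle := hle erefl.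
have heq := @eq_sums (fun p => U p + V p)%N (fun p => absz ((Posz (U p)) - (Posz (V p))))
  m.+1 ltac:(move=> p _ /=; lia) (leq_trans hcount hle).
have h0 : forall p, (p <= m)%N -> (U p = 0 \/ V p = 0)%N.
  by move=> p hp; have := heq p ltac:(lia); lia.
case: (classic (has_wall n m x s)) => // nw; exfalso.
have hin : forall p, (p <= m)%N -> (1 <= U p + V p)%N.
  move=> p hp.
  have : ~~ all (fun st => (st.2 != ylshift n m p st.1) && (st.2 != yrshift n m p st.1)) l.
    apply/negP => ha; apply: nw; left; exists p; split => //.
  rewrite -has_predC => /hasP [st hst] /=; rewrite negb_and !negbK => /orP [h|h].
    have : (0 < U p)%N by rewrite -has_count; apply/hasP; exists st.
    lia.
  have : (0 < V p)%N by rewrite -has_count; apply/hasP; exists st.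
  lia.
have hU0 : (0 < U 0)%N.
  rewrite -has_count; apply/negPn/negP => hn0; apply: nw; right; left.
  by move: hn0; rewrite -all_predC.
have hVm : (0 < V m)%N.
  rewrite -has_count; apply/negPn/negP => hn0; apply: nw; right; right.
  by move: hn0; rewrite -all_predC.
have hstep : forall p, (p < m)%N ->
  ((Posz (U p.+1)) - (Posz (V p.+1)) = (Posz (U p)) - (Posz (V p)) - nth 0 x p.+1)%R.
  move=> p hp; have := hxp p ltac:(lia); have := hxp p.+1 hp; rewrite PPS !hD; lia.
have hpos : forall p, (p <= m)%N -> (1 <= (Posz (U p)) - (Posz (V p)))%R.
  elim=> [|p IH] hp.
    have := h0 0%N (leq0n _); lia.
  have := hstep p hp; have := IH ltac:(lia); have := vinner hx (j := p.+1) ltac:(lia).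
  have := hin p.+1 hp; have := h0 p.+1 hp; lia.
have := hpos m (leqnn _); have := h0 m (leqnn _); lia.
Qed.
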